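(* In the setting of the context, suppose there exists $Q^-\in\mathcal L_1^-$ such that $\delta(Q^-,Q^+)=\bot$ for every $Q^+\in\mathcal L_1^+$. Then the only pair $(h_1,h_2)\in\mathbb C(s)^2$ with $\widetilde\gamma_1h_1+\widetilde\gamma_2h_2=0$, $h_1^{\iota_1}=-h_1$ and $h_2^{\iota_2}=-h_2$ is $(0,0)$.
   Context: For a genus-zero weighted quadrant walk model (step set one of the five genus-zero sets, step weights $d_{i,j}>0$, Boltzmann weights $a,b>0$), $A=1-1/a$, $B=1-1/b$. $s\mapsto(x(s),y(s))$ is a fixed rational parametrization by $\mathbb P^1$ of the kernel curve (for a fixed real $t$ transcendental over $\mathbb Q((d_{i,j}),a,b)$), with $x(1/s)=x(s)$, $y(q/s)=y(s)$ for a fixed real $q$ not a root of unity; $\iota_1(s)=1/s$, $\iota_2(s)=q/s$, $\sigma(s)=qs$, $h^\tau=h\circ\tau$. $\widetilde\gamma_1=A/x(s)-td_{1,-1}/y(s)$ and $\widetilde\gamma_2=B/y(s)-td_{-1,1}/x(s)$ have divisors $(\widetilde\gamma_1)=P_1+P_2-0-\infty$, $(\widetilde\gamma_2)=P_3+P_4-0-\infty$, $P_i\notin\{0,\infty\}$. $\mathcal L_1^-=\{P_1,P_2,\iota_2P_3,\iota_2P_4\}$, $\mathcal L_1^+=\{\iota_1P_1,\iota_1P_2,\sigma^{-1}P_3,\sigma^{-1}P_4\}$. For $P,P'\in\mathbb P^1\setminus\{0,\infty\}$, the $\sigma$-distance $\delta(P,P')$ is the unique integer $n$ with $\sigma^nP=P'$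 if it exists, and $\bot$ otherwise. *)

(* Defs.v *)
From HB Require Import structures.
From mathcomp Require Import all_boot all_order all_algebra.
From mathcomp Require Import reals.
From mathcomp Require Import complex.
Set Implicit Arguments.
Unset Strict Implicit.
Unset Printing Implicit Defensive.
Import Order.TTheory GRing.Theory Num.Theory.
Local Open Scope ring_scope.

Notation Cx R := (R[i])%type.
Notation ratfun R := {fraction {poly (Cx R)}}.

Section RatFun.
Variable R : realType.
Local Notation C := (Cx R).
Local Notation F := (ratfun R).
Local Notation "x %:F" := (@FracField.tofrac _ x).

Definition RtoC (r : R) : C := (r%:C)%C.
Definition cst (c : C) : F := (c%:P)%:F.
Definition rcst (r : R) : F := cst (RtoC r).

Definition svar : F := ('X : {poly C})%:F.

Definition fnum (h : F) : {poly C} := \n_(repr h).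
Definition fden (h : F) : {poly C} := \d_(repr h).

Definition peval (p : {poly C}) (u : F) : F := (map_poly cst p).[u].

(* h o u : substitution s := u in h  (h^tau = h o tau) *)
Definition fcomp (h u : F) : F := peval (fnum h) u / peval (fden h) u.

Definition iota1 (h : F) : F := fcomp h svar^-1.
Definition iota2 (q : R) (h : F) : F := fcomp h (rcst q / svar).
Definition sigmaf (q : R) (h : F) : F := fcomp h (rcst q * svar).

Definition ordc (c : C) (h : F) : int :=
  (mup c (fnum h))%:Z - (mup c (fden h))%:Z.
Definition ordinf (h : F) : int :=
  (size (fden h))%:Z - (size (fnum h))%:Z.

(* evaluation of a bivariate polynomial P(X,Y) (outer variable Y) at (u,v) *)
Definition peval2 (P : {poly {poly C}}) (u v : F) : F :=
  (map_poly (fun p : {poly C} => peval p u) P).[v].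
End RatFun.
Arguments svar {R}.

Inductive in_gen_ring (R : realType) (gens : seq R) : R -> Prop :=
  | gen_rat (x : rat) : in_gen_ring gens (ratr x)
  | gen_elt (r : R) : r \in gens -> in_gen_ring gens r
  | gen_add (r1 r2 : R) : in_gen_ring gens r1 -> in_gen_ring gens r2 ->
        in_gen_ring gens (r1 + r2)
  | gen_mul (r1 r2 : R) : in_gen_ring gens r1 -> in_gen_ring gens r2 ->
        in_gen_ring gens (r1 * r2).

(* t is transcendental over Q(gens): no nonzero polynomial with coefficients *)
(* in Q[gens] (equivalently, after clearing denominators, in Q(gens)) has t  *)
(* as a root.                                                                *)
Definition transcendental_over (R : realType) (gens : seq R) (t : R) : Prop :=
  forall p : {poly R}, (forall k, in_gen_ring gens p`_k) -> p != 0 -> ~~ root p t.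

(* Step weights d i j for steps (i,j) in {-1,0,1}^2 (values outside are      *)
Definition genus0_weights (R : realType) (d : int -> int -> R) : Prop :=
  [/\ forall i j : int, 0 <= d i j,
      [/\ d (-1) (-1) = 0, d (-1) 0 = 0, d 0 (-1) = 0 & d 0 0 = 0],
      0 < d (-1) 1, 0 < d 1 (-1)
    & 0 < d 0 1 + d 1 1 + d 1 0].

Definition walk_params (R : realType) (d : int -> int -> R) (a b : R) : seq R :=
  [:: d (-1) (-1); d (-1) 0; d (-1) 1; d 0 (-1); d 0 0; d 0 1;
      d 1 (-1); d 1 0; d 1 1; a; b].

(* kernel K(x,y) = x y - t \sum_{i,j} d_{i,j} x^{i+1} y^{j+1} evaluated in C(s) *)
Definition kernelF (R : realType) (d : int -> int -> R) (t : R)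
    (x y : ratfun R) : ratfun R :=
  x * y - rcst t * \sum_(i < 3) \sum_(j < 3)
      rcst (d (i%:Z - 1) (j%:Z - 1)) * x ^+ i * y ^+ j.

(* (x(s),y(s)) is a rational parametrization by P^1 of the kernel curve:      *)
(* it lies on the curve and is birational (s belongs to C(x(s),y(s))).       *)
Definition kernel_param (R : realType) (d : int -> int -> R) (t : R)
    (x y : ratfun R) : Prop :=
  kernelF d t x y = 0 /\
  exists P Q : {poly {poly Cx R}},
    peval2 Q x y != 0 /\ svar * peval2 Q x y = peval2 P x y.

(* sigma-distance on P^1 \ {0,oo} (points given by their coordinate s):     *)
(* delta(P,P') = n iff sigma^n P = P', i.e. q^n P = P';  "bot" means no n.   *)
Definition sigma_dist_bot (R : realType) (q : R) (P P' : Cx R) : Prop :=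
  forall n : int, RtoC q ^ n * P != P'.

(* Main.v *)
Require Import Defs.
From HB Require Import structures.
From mathcomp Require Import all_boot all_order all_algebra.
From mathcomp Require Import reals complex.
From mathcomp Require Import generic_quotient zify ring.
From Stdlib Require Classical_Prop.
Import Order.TTheory GRing.Theory Num.Theory.
Local Open Scope ring_scope.

Module Helpers.
Local Open Scope quotient_scope.
Set Implicit Arguments.
Unset Strict Implicit.
Unset Printing Implicit Defensive.
Section S.
Variable R : realType.
Local Notation C := (Cx R).
Local Notation F := (ratfun R).
Local Notation "x %:F" := (@FracField.tofrac _ x).

Lemma frac_repr (h : F) : h = (fnum h)%:F / (fden h)%:F.
Proof.
rewrite /fnum /fden -{1}[h]reprK.
move: (repr h) => x.
have dx : \d_x != 0 by [].
have H : (\pi_F x) * (\d_x)%:F = (\n_x)%:F.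
  rewrite !piE /= /FracField.mulf /= !numden_Ratio ?oner_neq0 //.
  apply/eqmodP; rewrite /= FracField.equivfE !numden_Ratio ?mulf_neq0 ?oner_neq0 //.
  by rewrite !mulr1 mulrC.
by rewrite -H mulfK // tofrac_eq0.
Qed.

Lemma fden_neq0 (h : F) : fden h != 0.
Proof. exact: denom_ratioP. Qed.

Lemma fnum_neq0 (h : F) : h != 0 -> fnum h != 0.
Proof.
move=> h0; apply: contraNneq h0 => e.
by rewrite [h]frac_repr e rmorph0 mul0r.
Qed.

Lemma ordc_frac (c : C) (N D : {poly C}) : N != 0 -> D != 0 ->
  ordc c (N%:F / D%:F) = (mup c N)%:Z - (mup c D)%:Z.
Proof.
move=> N0 D0; set h := N%:F / D%:F.
have h0 : h != 0 by rewrite mulf_neq0 ?invr_eq0 ?tofrac_eq0.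
have dh := fden_neq0 h; have nh := fnum_neq0 h0.
have E := frac_repr h.
have E2 : fnum h * D = N * fden h.
  apply/eqP; rewrite -tofrac_eq !tofracM -eqr_div ?tofrac_eq0 //.
  by rewrite -E.
move/(congr1 (mup c)): E2; rewrite !mupM // /ordc => E2.
lia.
Qed.

Lemma ordc_mul (c : C) (f g : F) : f != 0 -> g != 0 ->
  ordc c (f * g) = ordc c f + ordc c g.
Proof.
move=> f0 g0.
have e : f * g = (fnum f * fnum g)%:F / (fden f * fden g)%:F.
  by rewrite {1}[f]frac_repr {1}[g]frac_repr !tofracM invfM mulrACA.
rewrite e ordc_frac ?mulf_neq0 ?fnum_neq0 ?fden_neq0 //.
rewrite !mupM ?fnum_neq0 ?fden_neq0 // /ordc; lia.
Qed.

Lemma ordc_opp (c : C) (f : F) : f != 0 -> ordc c (- f) = ordc c f.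
Proof.
move=> f0.
have e : - f = ((-1)%:P * fnum f)%:F / (fden f)%:F.
  by rewrite {1}[f]frac_repr tofracM polyCN tofracN tofrac1 mulN1r mulNr.
have n1 : (-1)%:P != 0 :> {poly C} by rewrite polyC_eq0 oppr_eq0 oner_neq0.
rewrite e ordc_frac ?mulf_neq0 ?fnum_neq0 ?fden_neq0 // mupMr //.
by rewrite /root hornerC oppr_eq0 oner_neq0.
Qed.

Lemma ordc_root (c : C) (f : F) : ordc c f != 0 -> root (fnum f * fden f) c.
Proof.
apply: contraR; rewrite rootM negb_or => /andP[a b].
by rewrite /ordc !mupNroot.
Qed.

Lemma svar_neq0 : (svar : F) != 0.
Proof. by rewrite /svar tofrac_eq0 polyX_eq0. Qed.

Lemma cst_inj : injective (@cst R).
Proof. by move=> a b /eqP; rewrite /cst tofrac_eq => /eqP /polyC_inj. Qed.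

Definition Phi (k : C) (p : {poly C}) : F := peval p (cst k / svar).
Definition Tp (k : C) (D : nat) (p : {poly C}) : {poly C} :=
  \sum_(i < D) (p`_i * k ^+ i) *: 'X^(D - i).

Lemma Phi_T (k : C) (D : nat) (p : {poly C}) : (size p <= D)%N -> Phi k p * svar ^+ D = (Tp k D p)%:F.
Proof.
move=> sp.
have cst0 : cst 0 = 0 :> F by rewrite /cst polyC0 tofrac0.
rewrite /Phi /peval (@horner_coef_wide _ D); last first.
  by rewrite size_map_inj_poly //; apply: cst_inj.
rewrite mulr_suml /Tp rmorph_sum; apply: eq_bigr => i _.
rewrite coef_map_id0 // -mul_polyC.
rewrite !rmorphM !rmorphXn.
set s := (X in X ^+ (D - i)).
set a := (X in X * _ ^+ i * s ^+ _).
set b := (X in _ * X ^+ i * s ^+ _).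
change (a * (b / s) ^+ i * s ^+ D = a * b ^+ i * s ^+ (D - i)).
have s0 : s != 0 by exact: svar_neq0.
have eD : s ^+ D = s ^+ i * s ^+ (D - i) by rewrite -exprD subnKC // ltnW.
rewrite eD exprMn exprVn.
by rewrite !mulrA mulfVK ?expf_neq0.
Qed.

Lemma T_horner (k : C) (D : nat) (p : {poly C}) (c : C) : (size p <= D)%N -> c != 0 ->
  (Tp k D p).[c] = c ^+ D * p.[k / c].
Proof.
move=> sp c0.
rewrite /Tp horner_sum (horner_coef_wide _ sp) mulr_sumr; apply: eq_bigr => i _.
rewrite hornerZ hornerXn.
have eD : c ^+ D = c ^+ i * c ^+ (D - i) by rewrite -exprD subnKC // ltnW.
rewrite eD exprMn exprVn.
by rewrite [RHS]mulrC mulrA [p`_i * (_ / _)]mulrA mulfVK ?expf_neq0.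
Qed.

HB.instance Definition _ := GRing.RMorphism.copy (@cst R)
  ((@FracField.tofrac {poly C}) \o (@polyC C)).

Lemma Phi_mul (k : C) (p q : {poly C}) : Phi k (p * q) = Phi k p * Phi k q.
Proof. by rewrite /Phi /peval rmorphM hornerM. Qed.

Lemma Phi_XsubC (k a : C) : Phi k ('X - a%:P) = cst k / svar - cst a.
Proof. by rewrite /Phi /peval map_polyXsubC hornerXsubC. Qed.

Lemma mup_T (k c : C) : k != 0 -> c != 0 -> forall (m : nat) (p : {poly C}) (D : nat),
  p != 0 -> mup (k / c) p = m -> (size p <= D)%N ->
  Tp k D p != 0 /\ mup c (Tp k D p) = m.
Proof.
move=> k0 c0; set a := k / c.
have a0 : a != 0 by rewrite mulf_neq0 ?invr_eq0.
elim=> [|m IH] p D p0 mp sp.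
  have nr : ~~ root p a.
    by rewrite root_factor_theorem XsubC_dvd // mp.
  have nrT : ~~ root (Tp k D p) c.
    by rewrite /root T_horner // mulf_neq0 ?expf_neq0.
  split; last by rewrite mupNroot.
  by apply: contraNneq nrT => ->; rewrite root0.
have : root p a by rewrite root_factor_theorem XsubC_dvd // mp.
case/factor_theorem => p' ep.
have p'0 : p' != 0 by apply: contraNneq p0 => e; rewrite ep e mul0r.
have mp' : mup a p' = m.
  move: mp; rewrite ep mupM ?polyXsubC_eq0 //.
  have := mup_XsubCX 1 a a; rewrite expr1 eqxx => ->.
  by rewrite addn1 => -[].
have sp' : size p = (size p').+1.
  by rewrite ep size_Mmonic ?monicXsubC // size_XsubC addn2.
have D1 : D = D.-1.+1 by rewrite prednK // (leq_trans _ sp) // sp'.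
have sp'' : (size p' <= D.-1)%N by rewrite -ltnS -D1 -sp'.
have [T0 Tm] := IH p' D.-1 p'0 mp' sp''.
have eT : Tp k D p = (k%:P - a *: 'X) * Tp k D.-1 p'.
  apply/eqP; rewrite -tofrac_eq; apply/eqP.
  rewrite -Phi_T // tofracM -Phi_T // ep Phi_mul Phi_XsubC.
  rewrite {1}D1 exprS.
  have -> : ((k%:P - a *: 'X)%:F : F) = cst k - cst a * svar.
    by rewrite -mul_polyC tofracB tofracM.
  rewrite mulrA -[_ * _ * svar]mulrA [RHS]mulrCA [RHS]mulrA.
  congr (_ * _ * _).
  by rewrite mulrBl divfK ?svar_neq0.
have ek : k%:P - a *: 'X = (- a)%:P * ('X - c%:P) :> {poly C}.
  have -> : k = a * c by rewrite /a divfK.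
  rewrite -mul_polyC polyCM polyCN; ring.
split.
  by rewrite eT ek !mulf_neq0 ?polyC_eq0 ?oppr_eq0 ?polyXsubC_eq0.
rewrite eT ek mupM ?mulf_neq0 ?polyC_eq0 ?oppr_eq0 ?polyXsubC_eq0 //.
rewrite mupMr; last by rewrite /root hornerC oppr_eq0.
by have := mup_XsubCX 1 c c; rewrite expr1 eqxx => ->; rewrite Tm.
Qed.

Lemma div_cancel (K : fieldType) (a b x : K) : x != 0 -> a * x / (b * x) = a / b.
Proof. by move=> x0; rewrite invfM mulrACA divff // mulr1. Qed.

Lemma ordc_comp (k c : C) (h : F) : k != 0 -> c != 0 -> h != 0 ->
  ordc c (fcomp h (cst k / svar)) = ordc (k / c) h.
Proof.
move=> k0 c0 h0.
set n := fnum h; set d := fden h.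
have n0 : n != 0 by exact: fnum_neq0.
have d0 : d != 0 by exact: fden_neq0.
have [Tn0 Tnm] := mup_T k0 c0 n0 erefl (leqnn (size n)).
have [Td0 Tdm] := mup_T k0 c0 d0 erefl (leqnn (size d)).
have X0 : forall j, ~~ root ('X^j : {poly C}) c.
  by move=> j; rewrite /root hornerXn expf_neq0.
have e : fcomp h (cst k / svar) =
   (Tp k (size n) n * 'X^(size d))%:F / (Tp k (size d) d * 'X^(size n))%:F.
  rewrite /fcomp -/n -/d -/(Phi k n) -/(Phi k d).
  rewrite !tofracM -!Phi_T // !rmorphXn.
  change (Phi k n / Phi k d = Phi k n * svar ^+ size n * svar ^+ size d /
     (Phi k d * svar ^+ size d * svar ^+ size n)).
  rewrite -[Phi k n * _ * _]mulrA -[Phi k d * _ * _]mulrA.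
  have sC : (svar : F) ^+ size d * svar ^+ size n = svar ^+ size n * svar ^+ size d.
    by rewrite -!exprD addnC.
  have s0 : (svar : F) ^+ size n * svar ^+ size d != 0.
    by rewrite mulf_neq0 ?expf_neq0 ?svar_neq0.
  rewrite sC; exact: (esym (div_cancel _ _ s0)).
have Xn0 : forall j, ('X^j : {poly C}) != 0 by move=> j; rewrite monic_neq0 ?monicXn.
rewrite e ordc_frac ?mulf_neq0 ?Xn0 //.
by rewrite !mupMl // Tnm Tdm.
Qed.

Lemma ordc_iota1 (c : C) (h : F) : c != 0 -> h != 0 -> ordc c (iota1 h) = ordc c^-1 h.
Proof.
move=> c0 h0; rewrite /iota1.
have -> : (svar : F)^-1 = cst 1 / svar by rewrite /cst polyC1 tofrac1 mul1r.
by rewrite (ordc_comp (oner_neq0 _) c0 h0) div1r.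
Qed.

Lemma RtoC_neq0 (q : R) : q != 0 -> RtoC q != 0.
Proof.
move=> q0; apply/negP => /eqP E.
have : complex.Re (RtoC q) = complex.Re (0 : C) by rewrite E.
by move=> /= E'; rewrite E' eqxx in q0.
Qed.

Lemma ordc_iota2 (q : R) (c : C) (h : F) : q != 0 -> c != 0 -> h != 0 ->
  ordc c (iota2 q h) = ordc (RtoC q / c) h.
Proof.
move=> q0 c0 h0; rewrite /iota2 /rcst.
by rewrite (ordc_comp (RtoC_neq0 q0) c0 h0).
Qed.

Lemma RtoC_X (q : R) (n : nat) : RtoC q ^+ n = RtoC (q ^+ n).
Proof. by rewrite /RtoC rmorphXn. Qed.

Lemma qpow_neq1 (q : R) : (forall n : nat, (0 < n)%N -> q ^+ n != 1) ->
  forall n : nat, (0 < n)%N -> RtoC q ^+ n != 1.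
Proof.
move=> H n n0; rewrite RtoC_X; apply/negP => /eqP E.
have : complex.Re (RtoC (q ^+ n)) = complex.Re (1 : C) by rewrite E.
by move=> /= E'; move: (H n n0); rewrite E' eqxx.
Qed.

Lemma pinj (qc Qm : C) : Qm != 0 -> qc != 0 ->
  (forall n : nat, (0 < n)%N -> qc ^+ n != 1) ->
  forall n m : int, qc ^ n * Qm = qc ^ m * Qm -> n = m.
Proof.
move=> Q0 qc0 H n m /(mulIf Q0) e.
have e1 : qc ^ (n - m) = 1.
  by rewrite expfzDr // -invr_expz e divff // expfz_neq0.
have : n - m = 0.
  move: e1; case: (n - m) => [k|k] /=.
    case: k => [//|k] e2; exfalso; move: (H k.+1 isT); by rewrite -e2 eqxx.
  move=> e2; exfalso; move: (H k.+1 isT).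
  by move: e2; rewrite NegzE -exprnN => /eqP; rewrite invr_eq1 => ->.
by move/eqP; rewrite subr_eq0 => /eqP.
Qed.

Lemma avoid (qc Qm : C) :
  (forall n m : int, qc ^ n * Qm = qc ^ m * Qm -> n = m) ->
  forall P : {poly C}, P != 0 ->
  exists N : nat, forall n : int, (N <= `|n|)%N -> ~~ root P (qc ^ n * Qm).
Proof.
move=> inj P; elim: {P}(size P) {-2}P (leqnn (size P)) => [|s IH] P sP P0.
  by move: P0; rewrite -size_poly_eq0 -leqn0 sP.
case: (Classical_Prop.classic (exists n0, root P (qc ^ n0 * Qm))) => [[n0 r0]|nr].
  case/factor_theorem: r0 => P' eP.
  have P'0 : P' != 0 by apply: contraNneq P0 => e; rewrite eP e mul0r.
  have sP' : (size P' <= s)%N.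
    move: sP; rewrite eP size_Mmonic ?monicXsubC // size_XsubC addn2 //.
  have [N' HN'] := IH P' sP' P'0.
  exists (maxn N' (`|n0|.+1)) => n; rewrite geq_max => /andP[h1 h2].
  rewrite eP rootM negb_or HN' //= root_XsubC.
  apply/negP => /eqP /inj en; move: h2; rewrite en ltnn //.
exists 0%N => n _; apply/negP => r; apply: nr; by exists n.
Qed.
End S.

Lemma arith_rel (G1c v1c G2c v2c G1d v1d G2d v2d w : int) :
  G1c + v1c = G2c + v2c -> G1d + v1d = G2d + v2d -> v2d = v2c -> w = v1d ->
  v1c - w = G2c - G1c + G1d - G2d.
Proof. move=> *; lia. Qed.

Lemma arith_step (x1 x2 y1 y2 : int) :
  (Posz false + Posz false - Posz false) - (x1 + x2 - Posz false) +
  (Posz false + Posz false - Posz false) - (y1 + y2 - Posz false) =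
  - (x1 + x2 + y1 + y2).
Proof. rewrite /=; lia. Qed.

Lemma pos4 (a b c d : bool) : [|| a, b, c | d] ->
  0 < (Posz a + Posz b + Posz c + Posz d).
Proof. by case: a; case: b; case: c; case: d. Qed.

Lemma arith_N (N : nat) : - (N.+1)%:Z + N%:Z = -1.
Proof. lia. Qed.
End Helpers.
Import Helpers.
Unset Implicit Arguments.


Theorem lemma3p12
  (R : realType) (d : int -> int -> R) (a b t q : R)
  (x y : ratfun R) (P1 P2 P3 P4 : Cx R) :
  genus0_weights d -> 0 < a -> 0 < b ->
  transcendental_over (walk_params d a b) t ->
  q != 0 -> (forall n : nat, (0 < n)%N -> q ^+ n != 1) ->
  kernel_param d t x y ->
  iota1 x = x -> iota2 q y = y ->
  let A := 1 - a^-1 in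
  let B := 1 - b^-1 in
  let g1 := rcst A / x - rcst (t * d 1 (-1)) / y in
  let g2 := rcst B / y - rcst (t * d (-1) 1) / x in
  g1 != 0 -> g2 != 0 ->
  P1 != 0 -> P2 != 0 -> P3 != 0 -> P4 != 0 ->
  (forall c : Cx R, ordc c g1 = (c == P1)%:Z + (c == P2)%:Z - (c == 0)%:Z) ->
  ordinf g1 = -1 ->
  (forall c : Cx R, ordc c g2 = (c == P3)%:Z + (c == P4)%:Z - (c == 0)%:Z) ->
  ordinf g2 = -1 ->
  let qC := RtoC q in
  let L1m := [:: P1; P2; qC / P3; qC / P4] in
  let L1p := [:: P1^-1; P2^-1; P3 / qC; P4 / qC] in
  (exists2 Qm, Qm \in L1m & forall Qp, Qp \in L1p -> sigma_dist_bot q Qm Qp) ->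
  forall h1 h2 : ratfun R,
    g1 * h1 + g2 * h2 = 0 -> iota1 h1 = - h1 -> iota2 q h2 = - h2 ->
    h1 = 0 /\ h2 = 0.
Proof.
move=> _ _ _ _ q0 qn _ _ _ A B g1 g2 g1n0 g2n0 P1n0 P2n0 P3n0 P4n0 o1 _ o2 _
  qC L1m L1p [Qm QmL Qd] h1 h2 E i1 i2.
have [h10|h1n0] := eqVneq h1 0.
  split => //; move: E; rewrite h10 mulr0 add0r => /eqP.
  by rewrite mulf_eq0 (negbTE g2n0) /= => /eqP.
have [h20|h2n0] := eqVneq h2 0.
  move: E; rewrite h20 mulr0 addr0 => /eqP.
  by rewrite mulf_eq0 (negbTE g1n0) (negbTE h1n0).
exfalso.
have qC0 : qC != 0 by exact: RtoC_neq0.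
have Eo : forall z, ordc z g1 + ordc z h1 = ordc z g2 + ordc z h2.
  move=> z; rewrite -(ordc_mul z g1n0 h1n0) -(ordc_mul z g2n0 h2n0).
  have -> : g1 * h1 = - (g2 * h2) by apply/eqP; rewrite -subr_eq0 opprK E.
  exact: (ordc_opp z (mulf_neq0 g2n0 h2n0)).
have I1 : forall z, z != 0 -> ordc z^-1 h1 = ordc z h1.
  by move=> z z0; rewrite -(ordc_iota1 z0 h1n0) i1 (ordc_opp z h1n0).
have I2 : forall z, z != 0 -> ordc (qC / z) h2 = ordc z h2.
  move=> z z0; rewrite /qC -(ordc_iota2 q0 z0 h2n0) i2; exact: (ordc_opp z h2n0).
have Rel : forall c, c != 0 -> ordc c h1 - ordc (c / qC) h1 =
    ordc c g2 - ordc c g1 + ordc (qC / c) g1 - ordc (qC / c) g2.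
  move=> c c0.
  have c'0 : qC / c != 0 by rewrite mulf_neq0 ?invr_eq0.
  have e1 := Eo c; have e2 := Eo (qC / c); have e3 := I2 c c0.
  have e4 := I1 (qC / c) c'0; rewrite invf_div in e4.
  exact: arith_rel e1 e2 e3 e4.
have Qm0 : Qm != 0.
  move: QmL; rewrite !inE => /orP[/eqP->//|/orP[/eqP->//|/orP[/eqP->|/eqP->]]];
  by rewrite mulf_neq0 ?invr_eq0.
have inj := pinj Qm0 qC0 (qpow_neq1 qn).
pose p (n : int) := qC ^ n * Qm.
have p0 : forall n, p n != 0 by move=> n; rewrite mulf_neq0 ?expfz_neq0.
have pdiv : forall n, p n / qC = p (n - 1).
  by move=> n; rewrite /p expfzDr // exprN1 mulrAC.
have HP3 : forall n, p n != P3.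
  move=> n; apply/negP => /eqP e.
  have := Qd (P3 / qC); rewrite !inE eqxx ?orbT => /(_ isT) /(_ (n - 1)).
  by rewrite -/qC -[qC ^ (n - 1) * Qm]/(p (n - 1)) -pdiv e eqxx.
have HP4 : forall n, p n != P4.
  move=> n; apply/negP => /eqP e.
  have := Qd (P4 / qC); rewrite !inE eqxx ?orbT => /(_ isT) /(_ (n - 1)).
  by rewrite -/qC -[qC ^ (n - 1) * Qm]/(p (n - 1)) -pdiv e eqxx.
have HP1 : forall n, qC / p n != P1.
  move=> n; apply/negP => /eqP e.
  have := Qd (P1^-1); rewrite !inE eqxx ?orbT => /(_ isT) /(_ (n - 1)).
  by rewrite -/qC -[qC ^ (n - 1) * Qm]/(p (n - 1)) -pdiv -e invf_div eqxx.
have HP2 : forall n, qC / p n != P2.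
  move=> n; apply/negP => /eqP e.
  have := Qd (P2^-1); rewrite !inE eqxx ?orbT => /(_ isT) /(_ (n - 1)).
  by rewrite -/qC -[qC ^ (n - 1) * Qm]/(p (n - 1)) -pdiv -e invf_div eqxx.
pose f n := ordc (p n) h1.
have step : forall n, f n - f (n - 1) = - ((p n == P1)%:Z + (p n == P2)%:Z +
    (qC / p n == P3)%:Z + (qC / p n == P4)%:Z).
  move=> n; rewrite /f -pdiv (Rel _ (p0 n)) o1 o2 o1 o2.
  have qp0 : qC / p n != 0 by rewrite mulf_neq0 ?invr_eq0.
  rewrite (negbTE (p0 n)) (negbTE qp0) (negbTE (HP3 n)) (negbTE (HP4 n)).
  rewrite (negbTE (HP1 n)) (negbTE (HP2 n)).
  exact: arith_step.
have step1 : forall n, f (n + 1) <= f n.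
  move=> n; have := step (n + 1); rewrite addrK => e.
  by rewrite -subr_le0 e oppr_le0 !addr_ge0.
have mono : forall (m : int) (k : nat), f (m + k%:Z) <= f m.
  move=> m; elim=> [|k IH]; first by rewrite addr0.
  by rewrite -addn1 PoszD addrA (le_trans (step1 _)).
have strict : f 0 < f (-1).
  have := step 0; rewrite sub0r => e.
  have ep : p 0 = Qm by rewrite /p expr0z mul1r.
  rewrite -subr_lt0 e oppr_lt0 ep.
  apply: pos4.
  move: QmL; rewrite !inE => /orP[/eqP->|/orP[/eqP->|/orP[/eqP->|/eqP->]]].
  - by rewrite eqxx.
  - by rewrite eqxx orbT.
  - by rewrite (divKf qC0) eqxx !orbT.
  - by rewrite (divKf qC0) eqxx !orbT.
have P0 : fnum h1 * fden h1 != 0 := mulf_neq0 (fnum_neq0 h1n0) (fden_neq0 h1).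
have [N HN] := avoid inj P0.
have fz : forall n : int, (N <= `|n|)%N -> f n = 0.
  move=> n Hn; apply/eqP; apply: contraNT (HN n Hn) => /ordc_root.
  by [].
have a1 := mono (- (N.+1)%:Z) N.
have a2 := mono 0 N.
rewrite arith_N in a1.
rewrite add0r in a2.
rewrite (fz (- (N.+1)%:Z)) in a1; last by rewrite abszN; apply: leqnSn.
rewrite (fz N%:Z) in a2; last by apply: leqnn.
have := lt_le_trans (le_lt_trans a2 strict) a1.
by rewrite ltxx.
Qed.
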